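(* Let $B$ be a finite skew brace and $x\in B$. Define $B_0:=\{0,x\}$ and, for $n\ge 1$, $B_n:=\{a\circ b: a,b\in B_{n-1}\}\cup\{\lambda_a(b): a,b\in B_{n-1}\}$. Then $B(x)=\bigcup_n B_n$.
   Context: A skew brace is a triple $(B,+,\circ)$ where $(B,+)$ and $(B,\circ)$ are groups and $a\circ(b+c)=a\circ b-a+a\circ c$ for all $a,b,c$; $0$ is the common identity of both groups. $\lambda_a(b):=-a+a\circ b$. $B(x)$ denotes the smallest subset of $B$ containing $x$ that is a subgroup of both $(B,+)$ and $(B,\circ)$. *)

(* Defs.v *)
From mathcomp Require Import all_boot.
Set Implicit Arguments. Unset Strict Implicit. Unset Printing Implicit Defensive.

Record finSkewBrace := FinSkewBrace {
  sb_car :> finType;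
  sb_add : sb_car -> sb_car -> sb_car;
  sb_opp : sb_car -> sb_car;
  sb_zero : sb_car;
  sb_circ : sb_car -> sb_car -> sb_car;
  sb_cinv : sb_car -> sb_car;
  sb_addA : forall a b c, sb_add a (sb_add b c) = sb_add (sb_add a b) c;
  sb_add0r : forall a, sb_add sb_zero a = a;
  sb_addr0 : forall a, sb_add a sb_zero = a;
  sb_addNr : forall a, sb_add (sb_opp a) a = sb_zero;
  sb_addrN : forall a, sb_add a (sb_opp a) = sb_zero;
  sb_circA : forall a b c, sb_circ a (sb_circ b c) = sb_circ (sb_circ a b) c;
  sb_circ0r : forall a, sb_circ sb_zero a = a;
  sb_circr0 : forall a, sb_circ a sb_zero = a;
  sb_circVr : forall a, sb_circ (sb_cinv a) a = sb_zero;
  sb_circrV : forall a, sb_circ a (sb_cinv a) = sb_zero;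
  sb_brace : forall a b c,
    sb_circ a (sb_add b c) = sb_add (sb_add (sb_circ a b) (sb_opp a)) (sb_circ a c)
}.

Section SkewBraceDefs.
Variable B : finSkewBrace.

Definition sb_lambda (a b : B) : B := sb_add (sb_opp a) (sb_circ a b).

Definition is_add_subgroup (S : {set B}) : Prop :=
  sb_zero B \in S /\
  (forall a b, a \in S -> b \in S -> sb_add a b \in S) /\
  (forall a, a \in S -> sb_opp a \in S).

Definition is_circ_subgroup (S : {set B}) : Prop :=
  sb_zero B \in S /\
  (forall a b, a \in S -> b \in S -> sb_circ a b \in S) /\
  (forall a, a \in S -> sb_cinv a \in S).

(* B(x): the smallest subset containing x that is a subgroup of both groups,
   i.e. the intersection of all such subsets. *)
Definition in_gen_sub (x y : B) : Prop :=
  forall S : {set B}, x \in S -> is_add_subgroup S ->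
    is_circ_subgroup S -> y \in S.

Fixpoint Bn (x : B) (n : nat) : {set B} :=
  match n with
  | 0 => [set sb_zero B; x]
  | n'.+1 => [set sb_circ a b | a in Bn x n', b in Bn x n'] :|:
             [set sb_lambda a b | a in Bn x n', b in Bn x n']
  end.

End SkewBraceDefs.

(* Main.v *)
Require Import Defs.
From mathcomp Require Import all_boot.
From Stdlib Require Import ClassicalEpsilon.

Section Aux.
Variable B : finSkewBrace.
Variable x : B.

Lemma Bn0 n : sb_zero B \in Bn x n.
Proof.
elim: n => [|n IH] /=; first by rewrite !inE eqxx.
apply/setUP; left; rewrite -[sb_zero B](sb_circ0r (sb_zero B)).
exact: imset2_f.
Qed.

Lemma BnS n y : y \in Bn x n -> y \in Bn x n.+1.
Proof.
move=> Hy /=; apply/setUP; left; rewrite -(sb_circr0 y).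
by apply: imset2_f => //; exact: Bn0.
Qed.

Lemma Bn_mono n m y : n <= m -> y \in Bn x n -> y \in Bn x m.
Proof.
move=> /subnK <-; elim: (m - n) => [|k IH] //= Hy.
by apply: BnS; apply: IH.
Qed.

Lemma inj_onto (f : B -> B) (A : {set B}) :
  injective f -> (forall a, a \in A -> f a \in A) ->
  forall y, y \in A -> exists2 b, b \in A & f b = y.
Proof.
move=> inj stab.
have sub : f @: A \subset A by apply/subsetP=> z /imsetP [a Ha ->]; exact: stab.
have : f @: A == A.
  by rewrite eqEcard sub (@card_in_imset _ _ f A (fun a b _ _ E => inj a b E)) leqnn.
move/eqP=> E y Hy; rewrite -E in Hy; case/imsetP: Hy => b Hb ->.
by exists b.
Qed.

Lemma circ_inj (a : B) : injective (sb_circ a).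
Proof.
move=> u v E.
by rewrite -(sb_circ0r u) -(sb_circ0r v) -(sb_circVr a) -!sb_circA E.
Qed.

Lemma lambda_inj (a : B) : injective (sb_lambda a).
Proof.
move=> u v; rewrite /sb_lambda => E.
have : sb_add a (sb_add (sb_opp a) (sb_circ a u)) =
       sb_add a (sb_add (sb_opp a) (sb_circ a v)) by rewrite E.
rewrite !sb_addA sb_addrN !sb_add0r; exact: circ_inj.
Qed.

End Aux.

Theorem mainTheorem17 (B : finSkewBrace) (x : B) :
  forall y : B, in_gen_sub x y <-> exists n : nat, y \in Bn x n.
Proof.
move=> y; split.
- move=> H.
  pose U : {set B} := [set z | if excluded_middle_informative (exists n, z \in Bn x n)
                                then true else false].
  have UP : forall z, reflect (exists n, z \in Bn x n) (z \in U).
    move=> z; rewrite inE; case: excluded_middle_informative => h.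
    + by apply: ReflectT.
    + by apply: ReflectF.
  have circU : forall a b, a \in U -> b \in U -> sb_circ a b \in U.
    move=> a b /UP [n Ha] /UP [m Hb]; apply/UP; exists (maxn n m).+1 => /=.
    apply/setUP; left; apply: imset2_f.
    * by apply: Bn_mono Ha; rewrite leq_maxl.
    * by apply: Bn_mono Hb; rewrite leq_maxr.
  have lamU : forall a b, a \in U -> b \in U -> sb_lambda a b \in U.
    move=> a b /UP [n Ha] /UP [m Hb]; apply/UP; exists (maxn n m).+1 => /=.
    apply/setUP; right; apply: imset2_f.
    * by apply: Bn_mono Ha; rewrite leq_maxl.
    * by apply: Bn_mono Hb; rewrite leq_maxr.
  have zU : sb_zero B \in U by apply/UP; exists 0; exact: Bn0.
  have cinvU : forall a, a \in U -> sb_cinv a \in U.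
    move=> a Ha.
    have [b Hb E] := @inj_onto B _ _ (@circ_inj B a) (circU a ^~ Ha) _ zU.
    have -> : sb_cinv a = b.
      by apply: (@circ_inj B a); rewrite E sb_circrV.
    done.
  have oppU : forall a, a \in U -> sb_opp a \in U.
    move=> a Ha.
    have := lamU a (sb_cinv a) Ha (cinvU a Ha).
    by rewrite /sb_lambda sb_circrV sb_addr0.
  have addU : forall a b, a \in U -> b \in U -> sb_add a b \in U.
    move=> a b Ha Hb.
    have [c Hc E] := @inj_onto B _ _ (@lambda_inj B a) (lamU a ^~ Ha) _ Hb.
    have -> : sb_add a b = sb_circ a c.
      by rewrite -E /sb_lambda sb_addA sb_addrN sb_add0r.
    exact: circU.
  apply/UP; apply: H.
  + by apply/UP; exists 0; rewrite !inE eqxx orbT.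
  + by split; [|split].
  + by split; [|split].
- case=> n Hn S HxS [S0 [Sadd Sopp]] [_ [Scirc _]].
  elim: n y Hn => [|n IH] y /=.
  + by rewrite !inE => /orP [] /eqP ->.
  + case/setUP => /imset2P [a b Ha Hb ->].
    * by apply: Scirc; apply: IH.
    * by apply: Sadd; [apply: Sopp; apply: IH | apply: Scirc; apply: IH].
Qed.
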